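(* Let $E$ be a directed graph, let $V\subset E^0$, let $R$ be a commutative ring with identity, and let $\{p_v,s_e,s_{e^*}\}$ be the universal generating Leavitt $E$-family in $L_R(E)$. Let $M=\operatorname{span}_R\{s_\mu s_{\nu^*}:\mu,\nu\in E^*,\ r(\mu)\in V\}$ and $M^*=\operatorname{span}_R\{s_\mu s_{\nu^*}:\mu,\nu\in E^*,\ r(\nu)\in V\}$, and let $M^*M$ be the $R$-span of all products $nm$ with $n\in M^*$, $m\in M$. Then $M^*M=L_R(E)$ (i.e. $V$ is full) if and only if $\Sigma H(V)=E^0$.
   Context: A directed graph $E=(E^0,E^1,r,s)$ has countable vertex and edge sets with range and source maps $r,s:E^1\to E^0$. A vertex $v$ is singular if $r^{-1}(v)$ is empty or infinite. Finite paths $\mu=\mu_1\cdots\mu_n$ satisfy $s(\mu_i)=r(\mu_{i+1})$, with $r(\mu)=r(\mu_1)$, $s(\mu)=s(\mu_n)$; vertices are paths of length $0$; $E^*$ is the set of finite paths. $L_R(E)$ is the universal $R$-algebra generated by mutually orthogonal idempotents $p_v$ ($v\in E^0$) and elements $s_e,s_{e^*}$ ($e\in E^1$) subject to $p_{r(e)}s_e=s_e=s_ep_{s(e)}$, $p_{s(e)}s_{e^*}=s_{e^*}=s_{e^*}p_{r(e)}$, $s_{e^*}s_f=\delta_{e,f}p_{s(e)}$, and $p_v=\sum_{r(e)=v}s_es_{e^*}$ for non-singular $v$; $s_\mu=s_{\mu_1}\cdots s_{\mu_n}$, $s_{\mu^*}=s_{\mu_n^*}\cdots s_{\mu_1^*}$,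 $s_v=s_{v^*}=p_v$. Write $v\le w$ if there is $\mu\in E^*$ with $r(\mu)=v$, $s(\mu)=w$. A set $H\subset E^0$ is hereditary if $v\in H$, $v\le w$ imply $w\in H$; it is saturated if whenever $0<|r^{-1}(v)|<\infty$ and $s(r^{-1}(v))\subset H$ then $v\in H$. $\Sigma H(V)$ denotes the smallest saturated hereditary subset of $E^0$ containing $V$. *)

(* Defs.v *)
From HB Require Import structures.
From mathcomp Require Import all_boot all_order all_algebra.
Set Implicit Arguments. Unset Strict Implicit. Unset Printing Implicit Defensive.
Import GRing.Theory.
Local Open Scope ring_scope.

Section Graph.
Variables (V0 E1 : countType) (r s : E1 -> V0).

(* A finite path is a pair (v, es): if es = [::] it is the vertex v (length 0);
   otherwise es = mu_1 ... mu_n with r mu_1 = v and s mu_i = r mu_(i+1). *)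
Definition gpath := (V0 * seq E1)%type.

Definition valid_path (mu : gpath) : bool :=
  match mu.2 with
  | [::] => true
  | e :: es => (r e == mu.1) && path (fun e f => s e == r f) e es
  end.

Definition prange (mu : gpath) : V0 := mu.1.
Definition psource (mu : gpath) : V0 :=
  match mu.2 with [::] => mu.1 | e :: es => s (last e es) end.

Definition gle (v w : V0) : Prop :=
  exists mu, [/\ valid_path mu, prange mu = v & psource mu = w].

Definition enum_range (v : V0) (l : seq E1) : Prop :=
  uniq l /\ forall e, r e = v <-> e \in l.
Definition regular (v : V0) : Prop :=
  exists l, l != [::] /\ enum_range v l.

Definition hereditary (H : V0 -> Prop) : Prop :=
  forall v w, H v -> gle v w -> H w.
Definition saturated (H : V0 -> Prop) : Prop :=
  forall v, regular v -> (forall e, r e = v -> H (s e)) -> H v.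

Definition SigmaH (V : V0 -> Prop) (w : V0) : Prop :=
  forall H, hereditary H -> saturated H -> (forall v, V v -> H v) -> H w.

End Graph.

Definition is_nalg (R : comNzRingType) (A : lmodType R) (mul : A -> A -> A) : Prop :=
  [/\ forall x y z, mul x (mul y z) = mul (mul x y) z,
      forall (a : R) x y z, mul (a *: x + y) z = a *: mul x z + mul y z
    & forall (a : R) x y z, mul z (a *: x + y) = a *: mul z x + mul z y].

Definition is_nalg_hom (R : comNzRingType) (A B : lmodType R)
  (mulA : A -> A -> A) (mulB : B -> B -> B) (phi : A -> B) : Prop :=
  (forall (a : R) x y, phi (a *: x + y) = a *: phi x + phi y) /\
  (forall x y, phi (mulA x y) = mulB (phi x) (phi y)).

Section Leavitt.
Variables (V0 E1 : countType) (r s : E1 -> V0).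
Variables (R : comNzRingType) (A : lmodType R) (mul : A -> A -> A).
Variables (p : V0 -> A) (se sse : E1 -> A).

Definition leavitt_family : Prop :=
  [/\ (forall v, mul (p v) (p v) = p v) /\
      (forall v w, v != w -> mul (p v) (p w) = 0),
      forall e, mul (p (r e)) (se e) = se e /\ mul (se e) (p (s e)) = se e,
      forall e, mul (p (s e)) (sse e) = sse e /\ mul (sse e) (p (r e)) = sse e,
      forall e f, mul (sse e) (se f) = if e == f then p (s e) else 0
    & forall v l, l != [::] -> enum_range r v l ->
        p v = \sum_(e <- l) mul (se e) (sse e)].

Definition wprod (x : A) (xs : seq A) : A := foldl mul x xs.

Definition spath (mu : gpath V0 E1) : A :=
  match mu.2 with [::] => p mu.1 | e :: es => wprod (se e) (map se es) end.
Definition spath_star (mu : gpath V0 E1) : A :=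
  match rev mu.2 with [::] => p mu.1 | e :: es => wprod (sse e) (map sse es) end.

End Leavitt.

(* (A, mul, p, se, sse) is the universal Leavitt E-family, i.e. A = L_R(E). *)
Definition universal_leavitt (V0 E1 : countType) (r s : E1 -> V0)
  (R : comNzRingType) (A : lmodType R) (mul : A -> A -> A)
  (p : V0 -> A) (se sse : E1 -> A) : Prop :=
  is_nalg mul /\ leavitt_family r s mul p se sse /\
  forall (B : lmodType R) (mulB : B -> B -> B) (q : V0 -> B) (te tse : E1 -> B),
    is_nalg mulB -> leavitt_family r s mulB q te tse ->
    (exists phi : A -> B, is_nalg_hom mul mulB phi /\
       (forall v, phi (p v) = q v) /\ (forall e, phi (se e) = te e) /\
       (forall e, phi (sse e) = tse e)) /\
    (forall phi1 phi2 : A -> B,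
       is_nalg_hom mul mulB phi1 -> is_nalg_hom mul mulB phi2 ->
       (forall v, phi1 (p v) = q v) -> (forall e, phi1 (se e) = te e) ->
       (forall e, phi1 (sse e) = tse e) ->
       (forall v, phi2 (p v) = q v) -> (forall e, phi2 (se e) = te e) ->
       (forall e, phi2 (sse e) = tse e) -> forall x, phi1 x = phi2 x).

Definition rspan (R : comNzRingType) (A : lmodType R) (P : A -> Prop) (a : A) : Prop :=
  exists (n : nat) (c : 'I_n -> R) (x : 'I_n -> A),
    (forall i, P (x i)) /\ a = \sum_(i < n) c i *: x i.

(* Main.v *)
Require Import Defs.
From HB Require Import structures.
From mathcomp Require Import all_boot all_order all_algebra.
From mathcomp Require Import boolp functions.
Import GRing.Theory.
Local Open Scope ring_scope.
Set Implicit Arguments. Unset Strict Implicit. Unset Printing Implicit Defensive.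

Section Span.
Variables (R : comNzRingType) (A : lmodType R).

Inductive span (P : A -> Prop) : A -> Prop :=
| sp0 : span P 0
| spc c y z : P y -> span P z -> span P (c *: y + z).

Lemma rspan_span P x : rspan P x <-> span P x.
Proof.
split.
- case=> n [c [xs [Hx ->]]]; elim: n c xs Hx => [|n IH] c xs Hx.
    by rewrite big_ord0; constructor.
  rewrite big_ord_recl; apply: spc; first exact: Hx.
  exact: IH.
- elim=> [|c y z Py _ [n [cs [xs [Hx ->]]]]].
    by exists 0%N, (fun _ => 0), (fun _ => 0); split=> [[]|]; rewrite ?big_ord0.
  exists n.+1, (fun i => if unlift ord0 i is Some j then cs j else c),
               (fun i => if unlift ord0 i is Some j then xs j else y).
  split.
    by move=> i; case: (unlift ord0 i).
  by rewrite big_ord_recl unlift_none; congr (_ + _); apply: eq_bigr => i _; rewrite liftK.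
Qed.

Lemma span1 P x : P x -> span P x.
Proof. by move=> Px; rewrite -[x]scale1r -[_ *: x]addr0; apply: spc => //; constructor. Qed.

Lemma spanZD P a x y : span P x -> span P y -> span P (a *: x + y).
Proof.
move=> Hx Hy; elim: Hx => [|c u z Pu _ IH]; first by rewrite scaler0 add0r.
by rewrite scalerDr scalerA -addrA; apply: spc.
Qed.

Lemma spanD P x y : span P x -> span P y -> span P (x + y).
Proof. by move=> Hx Hy; rewrite -[x]scale1r; apply: spanZD. Qed.

Lemma spanZ P a x : span P x -> span P (a *: x).
Proof. by move=> Hx; rewrite -[_ *: x]addr0; apply: spanZD => //; constructor. Qed.

Lemma span_sum P (I : Type) (l : seq I) (F : I -> A) :
  (forall i, span P (F i)) -> span P (\sum_(i <- l) F i).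
Proof.
move=> HF; elim: l => [|i l IH]; first by rewrite big_nil; constructor.
by rewrite big_cons; apply: spanD.
Qed.

End Span.

Lemma span_map (R : comNzRingType) (A B : lmodType R) (P : A -> Prop) (Q : B -> Prop)
  (f : A -> B) : f 0 = 0 -> (forall c y z, f (c *: y + z) = c *: f y + f z) ->
  (forall y, P y -> span Q (f y)) -> forall x, span P x -> span Q (f x).
Proof.
move=> f0 fl HP x; elim=> [|c y z Py _ IH]; first by rewrite f0; constructor.
by rewrite fl; apply: spanZD => //; apply: HP.
Qed.

Section Alg.
Variables (R : comNzRingType) (A : lmodType R) (mul : A -> A -> A).
Hypothesis Hm : is_nalg mul.

Lemma mulA x y z : mul x (mul y z) = mul (mul x y) z.
Proof. by case: Hm. Qed.
Lemma mulZDl a x y z : mul (a *: x + y) z = a *: mul x z + mul y z.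
Proof. by case: Hm. Qed.
Lemma mulZDr a x y z : mul z (a *: x + y) = a *: mul z x + mul z y.
Proof. by case: Hm. Qed.
Lemma mul0l z : mul 0 z = 0.
Proof.
have := mulZDl 1 0 0 z; rewrite !scale1r !addr0 => H.
by apply: (@addrI _ (mul 0 z)); rewrite addr0 -H.
Qed.
Lemma mul0r z : mul z 0 = 0.
Proof.
have := mulZDr 1 0 0 z; rewrite !scale1r !addr0 => H.
by apply: (@addrI _ (mul z 0)); rewrite addr0 -H.
Qed.
Lemma mulDl x y z : mul (x + y) z = mul x z + mul y z.
Proof. by have := mulZDl 1 x y z; rewrite !scale1r. Qed.
Lemma mulDr x y z : mul z (x + y) = mul z x + mul z y.
Proof. by have := mulZDr 1 x y z; rewrite !scale1r. Qed.
Lemma mulZl a x z : mul (a *: x) z = a *: mul x z.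
Proof. have -> : a *: x = a *: x + 0 by rewrite addr0. by rewrite mulZDl mul0l addr0. Qed.
Lemma mulZr a x z : mul z (a *: x) = a *: mul z x.
Proof. have -> : a *: x = a *: x + 0 by rewrite addr0. by rewrite mulZDr mul0r addr0. Qed.
Lemma mul_sumr (I : Type) (l : seq I) (F : I -> A) z :
  mul z (\sum_(i <- l) F i) = \sum_(i <- l) mul z (F i).
Proof.
elim: l => [|i l IH]; first by rewrite !big_nil mul0r.
by rewrite !big_cons mulDr IH.
Qed.
Lemma fold_mulA x y ys : foldl mul (mul x y) ys = mul x (foldl mul y ys).
Proof. by elim: ys y => [|z zs IH] y //=; rewrite -mulA IH. Qed.
End Alg.

Section Paths.
Variables (V0 E1 : countType) (r s : E1 -> V0).
Local Notation valid := (valid_path r s).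

Lemma valid_consE u e es : valid (u, e :: es) = (r e == u) && valid (s e, es).
Proof. by rewrite /valid_path /=; case: es => //= f fs; rewrite [s e == _]eq_sym. Qed.

Lemma psource_cons u e es : psource s (u, e :: es) = psource s (s e, es).
Proof. by rewrite /psource; case: es. Qed.

Lemma psource_rcons u es f : psource s (u, rcons es f) = s f.
Proof. by rewrite /psource; case: es => //= e es; rewrite last_rcons. Qed.

Lemma valid_rcons u es f : valid (u, es) -> psource s (u, es) = r f -> valid (u, rcons es f).
Proof.
elim: es u => [|e es IH] u.
  by move=> _; rewrite /psource /= => ->; rewrite /valid_path /= eqxx.
rewrite /= -/(rcons es f) !valid_consE psource_cons => /andP [-> Hv] Hp /=.
exact: IH.
Qed.

Lemma valid_vertex u : valid (u, [::]).
Proof. by []. Qed.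

Lemma gle_path u es : valid (u, es) -> gle r s u (psource s (u, es)).
Proof. by move=> Hv; exists (u, es). Qed.

Lemma gle_ind (P : V0 -> Prop) :
  (forall e, P (r e) -> P (s e)) -> forall v w, gle r s v w -> P v -> P w.
Proof.
move=> HP v w [[u es] [Hv /= <- <-]].
elim: es u Hv => [|e es IH] u //=.
rewrite valid_consE psource_cons => /andP [/eqP <- Hv] Hr.
by apply: IH => //; apply: HP.
Qed.

End Paths.

Section Leav.
Variables (V0 E1 : countType) (r s : E1 -> V0).
Variables (R : comNzRingType) (A : lmodType R) (mul : A -> A -> A).
Variables (p : V0 -> A) (se sse : E1 -> A).
Hypothesis Hm : is_nalg mul.
Hypothesis Hf : leavitt_family r s mul p se sse.
Local Notation valid := (valid_path r s).
Local Notation sp := (spath mul p se).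
Local Notation ss := (spath_star mul p sse).
Local Notation psrc := (psource s).

Lemma pp v : mul (p v) (p v) = p v. Proof. by case: Hf => [[]]. Qed.
Lemma pmul v w : mul (p v) (p w) = if v == w then p v else 0.
Proof. case: eqP => [->|/eqP Hvw]; first exact: pp. by case: Hf => [[_ H]] *; apply: H. Qed.
Lemma p_se e : mul (p (r e)) (se e) = se e. Proof. by case: Hf => _ /(_ e) []. Qed.
Lemma se_p e : mul (se e) (p (s e)) = se e. Proof. by case: Hf => _ /(_ e) []. Qed.
Lemma p_sse e : mul (p (s e)) (sse e) = sse e. Proof. by case: Hf => _ _ /(_ e) []. Qed.
Lemma sse_p e : mul (sse e) (p (r e)) = sse e. Proof. by case: Hf => _ _ /(_ e) []. Qed.
Lemma sse_se e f : mul (sse e) (se f) = if e == f then p (s e) else 0.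
Proof. by case: Hf => _ _ _ ->. Qed.
Lemma leav v l : l != [::] -> enum_range r v l -> p v = \sum_(e <- l) mul (se e) (sse e).
Proof. by case: Hf => _ _ _ _ H; apply: H. Qed.

Local Notation mA := (mulA Hm).
Local Notation m0l := (mul0l Hm).
Local Notation m0r := (mul0r Hm).

Lemma spath_cons u e es : sp (u, e :: es) = mul (se e) (sp (s e, es)).
Proof.
case: es => [|f es]; first by rewrite /spath /= se_p.
by rewrite /spath /= /wprod /= fold_mulA.
Qed.

Lemma sstar_cons u e es : ss (u, e :: es) = mul (ss (s e, es)) (sse e).
Proof.
rewrite /spath_star /= rev_cons.
case Hr: (rev es) => [|g rest] /=; first by rewrite p_sse.
by rewrite /wprod map_rcons foldl_rcons.
Qed.

Lemma spath_lunit u es : valid (u, es) -> mul (p u) (sp (u, es)) = sp (u, es).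
Proof.
case: es => [|e es]; first by rewrite /spath /= pp.
by rewrite valid_consE => /andP [/eqP <- _]; rewrite spath_cons mA p_se.
Qed.

Lemma spath_runit mu : valid mu -> mul (sp mu) (p (psrc mu)) = sp mu.
Proof.
case: mu => u es; elim: es u => [|e es IH] u; first by rewrite /spath /= pp.
rewrite valid_consE psource_cons => /andP [_ Hv].
by rewrite !spath_cons -mA IH.
Qed.

Lemma sstar_lunit nu : valid nu -> mul (p (psrc nu)) (ss nu) = ss nu.
Proof.
case: nu => u es; elim: es u => [|e es IH] u; first by rewrite /spath_star /= pp.
rewrite valid_consE psource_cons => /andP [_ Hv].
by rewrite !sstar_cons mA IH.
Qed.

Lemma sstar_runit u es : valid (u, es) -> mul (ss (u, es)) (p u) = ss (u, es).
Proof.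
case: es => [|e es]; first by rewrite /spath_star /= pp.
by rewrite valid_consE => /andP [/eqP <- _]; rewrite sstar_cons -mA sse_p.
Qed.

Lemma spath_rcons u es f : valid (u, es) -> psrc (u, es) = r f ->
  sp (u, rcons es f) = mul (sp (u, es)) (se f).
Proof.
elim: es u => [|e es IH] u.
  by move=> _; rewrite /psource /= => ->; rewrite -/(rcons [::] f) spath_cons /spath /= se_p p_se.
rewrite valid_consE psource_cons => /andP [_ Hv] Hp /=.
by rewrite -/(rcons es f) !spath_cons IH // mA.
Qed.

Lemma sstar_rcons u es f : valid (u, es) -> psrc (u, es) = r f ->
  ss (u, rcons es f) = mul (sse f) (ss (u, es)).
Proof.
elim: es u => [|e es IH] u.
  by move=> _; rewrite /psource /= => ->; rewrite -/(rcons [::] f) sstar_cons /spath_star /= p_sse sse_p.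
rewrite valid_consE psource_cons => /andP [_ Hv] Hp /=.
by rewrite -/(rcons es f) !sstar_cons IH // mA.
Qed.

Definition Mon mu nu := mul (sp mu) (ss nu).

Definition okL (x : A) (nu : gpath V0 E1) := x = 0 \/ exists mu' nu', [/\ valid mu', valid nu', nu'.1 = nu.1 & x = Mon mu' nu'].
Definition okR (x : A) (mu : gpath V0 E1) := x = 0 \/ exists mu' nu', [/\ valid mu', valid nu', mu'.1 = mu.1 & x = Mon mu' nu'].

Lemma okL_same mu nu : valid mu -> valid nu -> okL (Mon mu nu) nu.
Proof. by move=> ? ?; right; exists mu, nu. Qed.
Lemma okR_same mu nu : valid mu -> valid nu -> okR (Mon mu nu) mu.
Proof. by move=> ? ?; right; exists mu, nu. Qed.

Lemma left_p a mu nu : valid mu -> valid nu -> okL (mul (p a) (Mon mu nu)) nu.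
Proof.
case: mu => u es Hmu Hnu; rewrite /Mon -(spath_lunit Hmu) !mA pmul.
case: eqP => [->|_]; last by rewrite !m0l; left.
by rewrite (spath_lunit Hmu); apply: okL_same.
Qed.

Lemma left_se f mu nu : valid mu -> valid nu -> okL (mul (se f) (Mon mu nu)) nu.
Proof.
case: mu => u es Hmu Hnu; rewrite /Mon mA.
case: (eqVneq (s f) u) => [Hu|Hu].
  right; exists (r f, f :: es), nu; split => //.
    by rewrite valid_consE eqxx Hu.
  by rewrite /Mon spath_cons Hu.
rewrite -(spath_lunit Hmu) mA -se_p -(mA (se f)) pmul (negbTE Hu) m0r !m0l.
by left.
Qed.

Lemma left_sse f mu nu : valid mu -> valid nu -> okL (mul (sse f) (Mon mu nu)) nu.
Proof.
case: mu => u [|e es] Hmu Hnu; rewrite /Mon mA.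
- rewrite {1}/spath /= -sse_p -(mA (sse f)) pmul.
  case: (eqVneq (r f) u) => [Hu|Hu]; last by rewrite m0r !m0l; left.
  case: nu Hnu => x ns Hnu.
  rewrite sse_p -(sstar_lunit Hnu) mA -sse_p -(mA (sse f)) pmul.
  case: (eqVneq (r f) (psource s (x, ns))) => [Hp|Hp]; last by rewrite m0r !m0l; left.
  rewrite sse_p.
  right; exists (s f, [::]), (x, rcons ns f); split => //.
    exact: (valid_rcons Hnu (esym Hp)).
  by rewrite /Mon (sstar_rcons Hnu (esym Hp)) /spath /= mA p_sse.
- move: Hmu; rewrite valid_consE => /andP [_ Hv].
  rewrite spath_cons !mA sse_se; case: eqP => [->|_]; last by rewrite !m0l; left.
  rewrite (spath_lunit Hv); exact: okL_same.
Qed.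

Lemma right_p a mu nu : valid mu -> valid nu -> okR (mul (Mon mu nu) (p a)) mu.
Proof.
case: nu => x ns Hmu Hnu; rewrite /Mon -(sstar_runit Hnu) -!mA pmul.
case: eqP => [_|_]; last by rewrite !m0r; left.
by rewrite (sstar_runit Hnu); apply: okR_same.
Qed.

Lemma right_sse f mu nu : valid mu -> valid nu -> okR (mul (Mon mu nu) (sse f)) mu.
Proof.
case: nu => x ns Hmu Hnu; rewrite /Mon -mA.
case: (eqVneq x (s f)) => [Hx|Hx].
  right; exists mu, (r f, f :: ns); split => //.
    by rewrite valid_consE eqxx -Hx.
  by rewrite /Mon sstar_cons Hx.
rewrite -(sstar_runit Hnu) -mA -p_sse (mA (p x)) pmul (negbTE Hx) m0l !m0r.
by left.
Qed.

Lemma right_se f mu nu : valid mu -> valid nu -> okR (mul (Mon mu nu) (se f)) mu.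
Proof.
case: nu => x [|e ns] Hmu Hnu; rewrite /Mon -mA.
- rewrite {1}/spath_star /= -p_se (mA (p x)) pmul.
  case: (eqVneq x (r f)) => [Hx|Hx]; last by rewrite m0l !m0r; left.
  case: mu Hmu => u ms Hmu.
  rewrite Hx p_se -(spath_runit Hmu) -mA -p_se (mA (p (psource s (u, ms)))) pmul.
  case: (eqVneq (psource s (u, ms)) (r f)) => [Hp|Hp]; last by rewrite m0l !m0r; left.
  rewrite Hp p_se.
  right; exists (u, rcons ms f), (s f, [::]); split => //.
    exact: (valid_rcons Hmu Hp).
  by rewrite /Mon (spath_rcons Hmu Hp) /spath_star /= -mA se_p.
- move: Hnu; rewrite valid_consE => /andP [_ Hv].
  rewrite sstar_cons -!mA sse_se; case: eqP => [_|_]; last by rewrite !m0r; left.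
  rewrite (sstar_runit Hv); exact: okR_same.
Qed.

End Leav.

Definition smclosed (R : pzRingType) (V : lmodType R) (P : V -> Prop) :=
  P 0 /\ (forall a u v, P u -> P v -> P (a *: u + v)).
Arguments smclosed {R V}.

Section SubMod.
Variables (R : pzRingType) (V : lmodType R) (P : V -> Prop).
Definition Pb : {pred V} := fun v => `[< P v >].
Definition subm (Hc : smclosed P) := {x : V | Pb x}.
Variable Hc : smclosed P.
HB.instance Definition _ := SubType.copy (subm Hc) {x : V | Pb x}.
HB.instance Definition _ := [Choice of subm Hc by <:].
Lemma Pb_closed : subsemimod_closed Pb.
Proof.
case: Hc => P0 PD; split; first split.
- by apply/asboolP.
- move=> u v /asboolP Pu /asboolP Pv; apply/asboolP.
  by have := PD 1 u v Pu Pv; rewrite scale1r.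
- move=> a u /asboolP Pu; apply/asboolP.
  by have := PD a u 0 Pu P0; rewrite addr0.
Qed.
HB.instance Definition _ := GRing.SubChoice_isSubLmodule.Build R V Pb (subm Hc) Pb_closed.
Lemma svalD (x y : subm Hc) : val (x + y) = val x + val y. Proof. by []. Qed.
Lemma svalZ a (x : subm Hc) : val (a *: x) = a *: val x. Proof. by []. Qed.
Lemma sval0 : val (0 : subm Hc) = 0. Proof. by []. Qed.
Lemma sval_sum (I : Type) (l : seq I) (F : I -> subm Hc) :
  val (\sum_(i <- l) F i) = \sum_(i <- l) val (F i).
Proof.
elim: l => [|i l IH]; first by rewrite !big_nil.
by rewrite !big_cons svalD IH.
Qed.
Lemma svalP (x : subm Hc) : P (val x).
Proof. exact: (asboolP _ (valP x)). Qed.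
Definition mkS x (Px : P x) : subm Hc := exist _ x (introT (asboolP _) Px).
Lemma mkSK x (Px : P x) : val (mkS Px) = x. Proof. by []. Qed.
End SubMod.
Arguments subm {R V P}.

Section Gen.
Variables (V0 E1 : countType) (r s : E1 -> V0).
Variables (R : comNzRingType) (A : lmodType R) (mul : A -> A -> A).
Variables (p : V0 -> A) (se sse : E1 -> A).
Hypothesis Hm : is_nalg mul.
Hypothesis Hf : leavitt_family r s mul p se sse.
Hypothesis U : universal_leavitt r s mul p se sse.

Inductive Gen : A -> Prop :=
| Gp v : Gen (p v)
| Gse e : Gen (se e)
| Gsse e : Gen (sse e)
| G0 : Gen 0
| GZD a x y : Gen x -> Gen y -> Gen (a *: x + y)
| Gmul x y : Gen x -> Gen y -> Gen (mul x y).

Let Hc : smclosed Gen := conj G0 GZD.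
Let C := subm Hc.
Let mulC (x y : C) : C := mkS Hc (Gmul (@svalP _ _ _ Hc x) (@svalP _ _ _ Hc y)).
Let qC v : C := mkS Hc (Gp v).
Let teC e : C := mkS Hc (Gse e).
Let tseC e : C := mkS Hc (Gsse e).

Let C_nalg : is_nalg mulC.
Proof.
case: Hm => H1 H2 H3; split.
- by move=> x y z; apply: val_inj; rewrite /= H1.
- by move=> a x y z; apply: val_inj; rewrite /= H2.
- by move=> a x y z; apply: val_inj; rewrite /= H3.
Qed.

Let C_fam : leavitt_family r s mulC qC teC tseC.
Proof.
split.
- split; first by move=> v; apply: val_inj; rewrite /= (pp Hf).
  by move=> v w Hvw; apply: val_inj; rewrite /= (pmul Hf) // (negbTE Hvw).
- by move=> e; split; apply: val_inj; rewrite /= ?(p_se Hf) ?(se_p Hf).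
- by move=> e; split; apply: val_inj; rewrite /= ?(p_sse Hf) ?(sse_p Hf).
- move=> e f; apply: val_inj; rewrite /= (sse_se Hf) //.
  by case: eqP.
- move=> v l Hl He; apply: val_inj; rewrite sval_sum /=.
  exact: (leav Hf).
Qed.

Lemma all_gen x : Gen x.
Proof.
case: U => _ [_ U'].
have [[phi [[Hl Hmul] [Hp [Hse Hsse]]]] _] := U' C mulC qC teC tseC C_nalg C_fam.
have [_ Huniq] := U' A mul p se sse Hm Hf.
have Hid : forall x, val (phi x) = x.
  apply: (Huniq (fun x => val (phi x)) id) => //.
  - split=> [a y z|y z]; first by rewrite Hl.
    by rewrite Hmul.
  - by move=> v; rewrite Hp.
  - by move=> e; rewrite Hse.
  - by move=> e; rewrite Hsse.
rewrite -(Hid x); exact: (@svalP _ _ _ Hc).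
Qed.

End Gen.

Lemma span_sum_in (R : comNzRingType) (A : lmodType R) (P : A -> Prop)
  (I : eqType) (l : seq I) (F : I -> A) :
  (forall i, i \in l -> span P (F i)) -> span P (\sum_(i <- l) F i).
Proof.
elim: l => [|i l IH] HF; first by rewrite big_nil; constructor.
rewrite big_cons; apply: spanD; first by apply: HF; rewrite inE eqxx.
by apply: IH => j Hj; apply: HF; rewrite inE Hj orbT.
Qed.

Section Ideal.
Variables (V0 E1 : countType) (r s : E1 -> V0) (V : V0 -> Prop).
Variables (R : comNzRingType) (A : lmodType R) (mul : A -> A -> A).
Variables (p : V0 -> A) (se sse : E1 -> A).
Hypothesis Hm : is_nalg mul.
Hypothesis Hf : leavitt_family r s mul p se sse.
Local Notation valid := (valid_path r s).
Local Notation Gen := (Gen mul p se sse).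

Definition PM (a : A) : Prop := exists mu nu : gpath V0 E1,
  [/\ valid mu, valid nu, V (prange mu) & a = mul (spath mul p se mu) (spath_star mul p sse nu)].
Definition PMs (a : A) : Prop := exists mu nu : gpath V0 E1,
  [/\ valid mu, valid nu, V (prange nu) & a = mul (spath mul p se mu) (spath_star mul p sse nu)].
Definition PQ (a : A) : Prop := exists n m, [/\ rspan PMs n, rspan PM m & a = mul n m].

Lemma Ms_left a : Gen a -> forall n, span PMs n -> span PMs (mul a n).
Proof.
have gen_case : forall g, (forall mu nu, valid mu -> valid nu -> okL r s mul p se sse (mul g (Mon mul p se sse mu nu)) nu) ->
   forall n, span PMs n -> span PMs (mul g n).
  move=> g Hg; apply: span_map; first exact: mul0r.
    by move=> c y z; rewrite mulZDr.
  move=> y [mu [nu [Hmu Hnu HV ->]]].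
  case: (Hg mu nu Hmu Hnu) => [->|[mu' [nu' [Hmu' Hnu' Hr ->]]]]; first by constructor.
  by apply: span1; exists mu', nu'; split => //; rewrite /prange Hr.
elim=> [v|e|e||c x y _ IHx _ IHy|x y _ IHx _ IHy] n Hn.
- by apply: gen_case Hn => mu nu; apply: left_p.
- by apply: gen_case Hn => mu nu; apply: left_se.
- by apply: gen_case Hn => mu nu; apply: left_sse.
- by rewrite mul0l //; constructor.
- by rewrite mulZDl //; apply: spanZD; [apply: IHx | apply: IHy].
- by rewrite -mulA //; apply: IHx; apply: IHy.
Qed.

Lemma M_right a : Gen a -> forall m, span PM m -> span PM (mul m a).
Proof.
have gen_case : forall g, (forall mu nu, valid mu -> valid nu -> okR r s mul p se sse (mul (Mon mul p se sse mu nu) g) mu) ->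
   forall m, span PM m -> span PM (mul m g).
  move=> g Hg; apply: span_map; first exact: mul0l.
    by move=> c y z; rewrite mulZDl.
  move=> y [mu [nu [Hmu Hnu HV ->]]].
  case: (Hg mu nu Hmu Hnu) => [->|[mu' [nu' [Hmu' Hnu' Hr ->]]]]; first by constructor.
  by apply: span1; exists mu', nu'; split => //; rewrite /prange Hr.
elim=> [v|e|e||c x y _ IHx _ IHy|x y _ IHx _ IHy] m Hn.
- by apply: gen_case Hn => mu nu; apply: right_p.
- by apply: gen_case Hn => mu nu; apply: right_se.
- by apply: gen_case Hn => mu nu; apply: right_sse.
- by rewrite mul0r //; constructor.
- by rewrite mulZDr //; apply: spanZD; [apply: IHx | apply: IHy].
- by rewrite mulA //; apply: IHy; apply: IHx.
Qed.

Lemma I_left a x : Gen a -> span PQ x -> span PQ (mul a x).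
Proof.
move=> Ha; apply: span_map; first exact: mul0r.
  by move=> c y z; rewrite mulZDr.
move=> y [n [m [Hn Hm' ->]]]; apply: span1; exists (mul a n), m; split => //.
  by apply/rspan_span; apply: Ms_left => //; apply/rspan_span.
by rewrite mulA.
Qed.

Lemma I_right a x : Gen a -> span PQ x -> span PQ (mul x a).
Proof.
move=> Ha; apply: (span_map (f := fun x => mul x a)); first exact: mul0l.
  by move=> c y z; rewrite mulZDl.
move=> y [n [m [Hn Hm' ->]]]; apply: span1; exists n, (mul m a); split => //.
  by apply/rspan_span; apply: M_right => //; apply/rspan_span.
by rewrite mulA.
Qed.

Hypothesis HS : forall w, SigmaH r s V w.
Hypothesis HG : forall x, Gen x.

Lemma pv_in v : span PQ (p v).
Proof.
have := @HS v (fun v => span PQ (p v)); apply.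
- move=> u w Hu Hle; apply: (@gle_ind _ _ r s (fun v => span PQ (p v)) _ u w Hle Hu) => e He.
  have -> : p (s e) = mul (sse e) (mul (p (r e)) (se e)).
    by rewrite (p_se Hf) (sse_se Hf) eqxx.
  by apply: I_left => //; apply: I_right.
- move=> u [l [Hl He]] Hs.
  rewrite (leav Hf Hl He); apply: span_sum_in => e Hel.
  rewrite -(p_sse Hf); apply: I_left => //; apply: I_right => //.
  by apply: Hs; apply/(proj2 He).
- move=> u Hu; apply: span1; exists (p u), (p u); split; last by rewrite (pp Hf).
  + apply/rspan_span; apply: span1; exists (u, [::]), (u, [::]); split => //.
    by rewrite /spath /spath_star /= (pp Hf).
  + apply/rspan_span; apply: span1; exists (u, [::]), (u, [::]); split => //.
    by rewrite /spath /spath_star /= (pp Hf).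
Qed.

Lemma all_in_I x : span PQ x.
Proof.
elim: (HG x) => [v|e|e||c y z _ IHy _ IHz|y z _ IHy Hz _].
- exact: pv_in.
- by rewrite -(p_se Hf); apply: I_right => //; apply: pv_in.
- by rewrite -(sse_p Hf); apply: I_left => //; apply: pv_in.
- by constructor.
- exact: spanZD.
- exact: I_right.
Qed.

End Ideal.

(* ---------- the representation killing a hereditary saturated set ---------- *)
Section Rep.
Variables (V0 E1 : countType) (r s : E1 -> V0).
Variable (R : comNzRingType).
Variable H : V0 -> Prop.
Hypothesis Hher : hereditary r s H.
Hypothesis Hsat : saturated r s H.
Local Notation valid := (valid_path r s).
Local Notation Z := (gpath V0 E1).
Local Notation F := (Z -> R^o).

Definition linP (T : F -> F) : Prop := forall (a : R) f g, T (a *: f + g) = a *: T f + T g.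
Lemma linP_closed : smclosed linP.
Proof.
split.
- move=> a f g; apply: funext => x /=. by rewrite /GRing.zero /= scaler0 addr0.
- move=> a T U HT HU b f g.
  transitivity (a *: T (b *: f + g) + U (b *: f + g)); first by [].
  rewrite HT HU.
  transitivity (b *: (a *: T f + U f) + (a *: T g + U g)); last by [].
  by rewrite !scalerDr !scalerA [a * b]mulrC addrACA.
Qed.

Definition B := subm linP_closed.
Definition mulB (x y : B) : B.
Proof.
refine (mkS linP_closed (x := fun f => val x (val y f)) _).
move=> a f g; have Hx := @svalP _ _ _ linP_closed x; have Hy := @svalP _ _ _ linP_closed y.
by rewrite Hy Hx.
Defined.

Lemma mulB_val (x y : B) : val (mulB x y) = fun f => val x (val y f).
Proof. by []. Qed.

Lemma valB_ZD a (x y : B) : val (a *: x + y) = a *: val x + val y.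
Proof. rewrite (@svalD _ _ _ linP_closed) (@svalZ _ _ _ linP_closed). reflexivity. Qed.
Lemma valB_mul (x y : B) f : val (mulB x y) f = val x (val y f).
Proof. reflexivity. Qed.

Lemma B_nalg : is_nalg mulB.
Proof.
split.
- move=> x y z; apply: val_inj; apply: funext => f; rewrite !valB_mul; reflexivity.
- move=> a x y z; apply: val_inj; apply: funext => f.
  rewrite valB_mul !valB_ZD.
  transitivity (a *: val x (val z f) + val y (val z f)); first reflexivity.
  transitivity (a *: val (mulB x z) f + val (mulB y z) f); last reflexivity.
  by rewrite !valB_mul.
- move=> a x y z; apply: val_inj; apply: funext => f.
  have Hz := @svalP _ _ _ linP_closed z.
  rewrite valB_mul !valB_ZD.
  transitivity (val z (a *: val x f + val y f)); first reflexivity.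
  rewrite Hz.
  transitivity (a *: val (mulB z x) f + val (mulB z y) f); last reflexivity.
  by rewrite !valB_mul.
Qed.

Definition pull (t : Z -> option Z) : F -> F :=
  fun f x => if t x is Some y then f y else 0.
Lemma pull_lin t : linP (pull t).
Proof.
move=> a f g; apply: funext => x.
transitivity (if t x is Some y then (a *: f y + g y : R^o) else 0); first by rewrite /pull; case: (t x).
transitivity (a *: pull t f x + pull t g x : R^o); last reflexivity.
by rewrite /pull; case: (t x) => //; rewrite scaler0 addr0.
Qed.
Definition mkB t : B := mkS linP_closed (pull_lin t).

Lemma mkB_mul t u : mulB (mkB t) (mkB u) = mkB (fun x => obind u (t x)).
Proof.
apply: val_inj; rewrite mulB_val /=; apply: funext => f; apply: funext => x.
by rewrite /pull; case: (t x).
Qed.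

Lemma mkB_ext t u : (forall x, t x = u x) -> mkB t = mkB u.
Proof.
move=> Htu; apply: val_inj => /=; apply: funext => f; apply: funext => x.
by rewrite /pull Htu.
Qed.

Lemma mkB_none : mkB (fun _ => None) = 0.
Proof. by apply: val_inj. Qed.

Definition cc (u : V0) : option E1 :=
  match pselect (exists e, r e = u /\ ~ H (s e)) with
  | left h => Some (projT1 (cid h))
  | right _ => None
  end.

Lemma cc_spec u e : cc u = Some e -> r e = u /\ ~ H (s e).
Proof.
rewrite /cc; case: pselect => // h [<-].
by case: (cid h) => /= x.
Qed.

Lemma cc_ex u : (exists e, r e = u /\ ~ H (s e)) -> exists e, cc u = Some e.
Proof. by rewrite /cc; case: pselect => // h _; eexists. Qed.

Definition normal (x : Z) : Prop :=
  match x.2 with [::] => True | e :: es => cc (r (last e es)) <> Some (last e es) end.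
Definition good (x : Z) : Prop := [/\ valid x, ~ H (psource s x) & normal x].
Definition gb (x : Z) : bool := `[< good x >].

Lemma good_range x : good x -> ~ H x.1.
Proof.
case: x => u es [Hv Hs _] Hu; apply: Hs.
exact: (Hher Hu (gle_path Hv)).
Qed.

Definition tP v (x : Z) : option Z := if gb x && (x.1 == v) then Some x else None.
Definition tS e (x : Z) : option Z :=
  if gb x then
    match x.2 with
    | f :: es => if f == e then Some (s e, es) else None
    | [::] => if cc x.1 == Some e then Some (s e, [::]) else None
    end
  else None.
Definition ncons e (x : Z) : Z :=
  match x.2 with
  | [::] => if cc (r e) == Some e then (r e, [::]) else (r e, [:: e])
  | es => (r e, e :: es)
  end.
Definition tSS e (x : Z) : option Z := if gb x && (s e == x.1) then Some (ncons e x) else None.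

Lemma tS_good e x y : tS e x = Some y -> [/\ good x, good y, y.1 = s e & x.1 = r e].
Proof.
rewrite /tS; case: (boolP (gb x)) => // /asboolP Hx.
case: x Hx => u [|f es] Hx /=.
  case: eqP => // /cc_spec [Hr Hs] [<-]; split => //.
case: (f =P e) => // Hfe [<-]; subst f.
case: Hx => Hv Hs Hn.
move: (Hv); rewrite valid_consE => /andP [/eqP Hr Hv']; split => //.
split => //; first by move: Hs; rewrite psource_cons.
by move: Hn; rewrite /normal /=; case: es {Hv Hv' Hs}.
Qed.

Lemma ncons_good e x : good x -> s e = x.1 -> good (ncons e x) /\ (ncons e x).1 = r e.
Proof.
case: x => u [|f es] [Hv Hs Hn] /= Hu.
- rewrite /ncons /=; case: eqP => Hc /=; split => //; split => //.
  + move=> Hre; apply: Hs; rewrite /psource /= -Hu.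
    apply: (Hher Hre); exists (r e, [:: e]); split => //.
    by rewrite /valid_path /= eqxx.
  + by rewrite /valid_path /= eqxx.
  + by rewrite /psource /= Hu.
- split => //; split.
  + by rewrite valid_consE eqxx Hu.
  + by rewrite psource_cons Hu.
  + by [].
Qed.

Definition fedge (x : Z) : option E1 := if x.2 is f :: _ then Some f else cc x.1.

Lemma fedge_range x e : good x -> fedge x = Some e -> r e = x.1.
Proof.
case: x => u [|f es] Hx /=; first by move/cc_spec => [].
case=> <-; case: Hx => Hv _ _; move: Hv; rewrite valid_consE => /andP [/eqP -> _].
by [].
Qed.

Lemma SSS e x : obind (tSS e) (tS e x) = if gb x && (fedge x == Some e) then Some x else None.
Proof.
case Ht: (tS e x) => [y|] /=.
- have [Hx Hy Hy1 Hx1] := tS_good Ht.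
  have gx : gb x := introT (asboolP _) Hx.
  have gy : gb y := introT (asboolP _) Hy.
  move: Ht; rewrite /tS /tSS gx gy Hy1 eqxx /=.
  case: x Hx Hx1 gx => u [|f es] Hx Hx1 gx /=.
  + case: eqP => // Hc [<-]; rewrite /ncons /=.
    have Hu : u = r e := Hx1.
    by rewrite -Hu Hc eqxx.
  + case: (f =P e) => // Hfe [<-]; subst f; rewrite /fedge /= eqxx /ncons /=.
    have Hu : u = r e := Hx1.
    case: es Hx {gx Hx1} => [|g gs] Hx; last by rewrite Hu.
    case: Hx => _ _ /= Hn; case: eqP => Hc; first by exfalso; apply: Hn.
    by rewrite Hu.
- move: Ht; rewrite /tS; case: (gb x) => //=.
  case: x => u [|f es] /=.
  + by case: eqP => // Hc _; case: eqP => // Hc'; rewrite Hc' in Hc.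
  + by case: eqP => // Hne _; case: eqP => // [[]] Hfe; rewrite Hfe in Hne.
Qed.

Lemma gbT x : good x -> gb x = true.
Proof. by move=> Gx; apply/asboolP. Qed.

Lemma SSS2 e f x : obind (tS f) (tSS e x) = if e == f then tP (s e) x else None.
Proof.
rewrite /tSS /tP [x.1 == s e]eq_sym.
case E: (gb x && (s e == x.1)); last by case: (e == f).
move/andP: E => [gx /eqP sx]; have gx' := gx; move/asboolP: gx' => Gx.
have [g1 _] := ncons_good Gx sx.
rewrite /= /tS (gbT g1).
case: x gx Gx sx g1 => u [|g gs] gx Gx sx g1 /=.
- rewrite /ncons /=; case: eqP => Hc /=.
  + rewrite Hc; case: (e =P f) => [Hef|ne].
      by subst f; rewrite eqxx sx.
    by case: eqP => // [[]] Hef; rewrite Hef in ne.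
  + case: (e =P f) => [Hef|ne] //.
    by subst f; rewrite sx.
- rewrite /ncons /=; case: (e =P f) => [Hef|ne] //.
  by subst f; rewrite sx.
Qed.

Definition qB v := mkB (tP v).
Definition teB e := mkB (tS e).
Definition tseB e := mkB (tSS e).

Lemma valB_mkB t f x : val (mkB t) f x = pull t f x.
Proof. reflexivity. Qed.

Lemma B_fam : leavitt_family r s mulB qB teB tseB.
Proof.
split.
- split.
  + move=> v; rewrite /qB mkB_mul; apply: mkB_ext => x.
    by rewrite /tP; case E: (gb x && (x.1 == v)) => //=; rewrite E.
  + move=> v w Hvw; rewrite /qB mkB_mul -mkB_none; apply: mkB_ext => x.
    rewrite /tP; case E: (gb x && (x.1 == v)) => //=.
    by move/andP: E => [-> /eqP ->]; rewrite (negbTE Hvw).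
- move=> e; split; rewrite /qB /teB mkB_mul; apply: mkB_ext => x.
  + case Ht: (tS e x) => [y|]; last by rewrite /tP; case: (_ && _) => //=; rewrite Ht.
    have [Gx _ _ x1] := tS_good Ht.
    by rewrite /tP (gbT Gx) x1 eqxx /= Ht.
  + case Ht: (tS e x) => [y|] //=.
    have [_ Gy y1 _] := tS_good Ht.
    by rewrite /tP (gbT Gy) y1 eqxx.
- move=> e; split; rewrite /qB /tseB mkB_mul; apply: mkB_ext => x.
  + rewrite /tP /tSS [x.1 == s e]eq_sym.
    by case E: (gb x && (s e == x.1)) => //=; rewrite E.
  + rewrite /tSS; case E: (gb x && (s e == x.1)) => //=.
    move/andP: E => [/asboolP Gx /eqP sx].
    have [g1 g2] := ncons_good Gx sx.
    by rewrite /tP (gbT g1) g2 eqxx.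
- move=> e f; rewrite /tseB /teB mkB_mul.
  case: (e =P f) => [<-|ne].
  + by apply: mkB_ext => x; rewrite SSS2 eqxx.
  + rewrite -mkB_none; apply: mkB_ext => x; rewrite SSS2.
    by case: eqP.
- move=> v l Hl [Hu He].
  have -> : \sum_(e <- l) mulB (teB e) (tseB e) =
            \sum_(e <- l) mkB (fun x => obind (tSS e) (tS e x)).
    by apply: eq_bigr => e _; rewrite mkB_mul.
  apply: val_inj; apply: funext => f; apply: funext => x.
  rewrite (@sval_sum _ _ _ linP_closed) fct_sumE fct_sumE valB_mkB.
  under eq_bigr => e _ do rewrite valB_mkB /pull SSS.
  rewrite /pull /tP.
  case: (boolP (gb x)) => [gx|] /=; last by rewrite big1.
  have Gx : good x := asboolP _ gx.
  case: (x.1 =P v) => [x1|nx1] /=.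
  + have [e0 He0] : exists e0, fedge x = Some e0.
      case: x gx Gx x1 => u [|g gs] gx Gx /= x1; last by exists g.
      apply: cc_ex; case: (pselect (exists e, r e = u /\ ~ H (s e))) => // Hn.
      exfalso; apply: (good_range Gx) => /=.
      apply: (Hsat (v := u)); first by exists l; split => //; rewrite x1.
      move=> e He'; case: (pselect (H (s e))) => // nH; exfalso; apply: Hn.
      by exists e.
    have e0l : e0 \in l by apply/He; rewrite (fedge_range Gx He0).
    rewrite (bigD1_seq e0) //= He0 eqxx big1 ?addr0 //.
    by move=> i ne; case: eqP => // [[]] Hi; rewrite Hi eqxx in ne.
  + rewrite big_seq big1 // => e el.
    case: eqP => // He0; exfalso; apply: nx1.
    by rewrite -(fedge_range Gx He0); apply/He.
Qed.

Lemma qB_H v : H v -> qB v = 0.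
Proof.
move=> Hv; rewrite /qB -mkB_none; apply: mkB_ext => x; rewrite /tP.
case: (boolP (gb x)) => [/asboolP Gx|] //=; case: eqP => // Hx1.
by exfalso; apply: (good_range Gx); rewrite Hx1.
Qed.

Lemma qB_nz w : ~ H w -> qB w <> 0.
Proof.
move=> Hw H0.
pose x0 : Z := (w, [::]).
have Gx : good x0 by split.
have := congr1 (fun b : B => val b (fun y => if y == x0 then 1 else 0) x0) H0.
rewrite valB_mkB /pull /tP (gbT Gx) eqxx /= eqxx.
move=> H10; have : (1 : R) = 0 by exact: H10.
by move/eqP; rewrite oner_eq0.
Qed.

End Rep.

Unset Implicit Arguments.

Theorem lemma3p2 (V0 E1 : countType) (r s : E1 -> V0) (V : V0 -> Prop)
  (R : comNzRingType) (A : lmodType R) (mul : A -> A -> A)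
  (p : V0 -> A) (se sse : E1 -> A) :
  universal_leavitt r s mul p se sse ->
  let M := rspan (fun a : A => exists mu nu : gpath V0 E1,
             [/\ valid_path r s mu, valid_path r s nu, V (prange mu)
               & a = mul (spath mul p se mu) (spath_star mul p sse nu)]) in
  let Mstar := rspan (fun a : A => exists mu nu : gpath V0 E1,
             [/\ valid_path r s mu, valid_path r s nu, V (prange nu)
               & a = mul (spath mul p se mu) (spath_star mul p sse nu)]) in
  let MstarM := rspan (fun a : A => exists n m, [/\ Mstar n, M m & a = mul n m]) in
  (forall a : A, MstarM a) <-> (forall w : V0, SigmaH r s V w).
Proof.
move=> U M Mstar MstarM.
have [Hm [Hf _]] := U.
split; last first.
  move=> HS a; apply/rspan_span.
  exact: (all_in_I Hm Hf HS (all_gen Hm Hf U)).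
move=> Hall w.
case: (pselect (SigmaH r s V w)) => // nS; exfalso.
move: nS; rewrite /SigmaH => /existsNP [H /not_implyP [Hh /not_implyP [Hs /not_implyP [HV nHw]]]].
case: U => _ [_ U'].
have Fam := B_fam R Hh Hs.
have [[phi [[Hl Hmul] [Hp [Hse Hsse]]]] _] := U' _ _ _ _ _ (B_nalg V0 E1 R) Fam.
have phi0 : phi 0 = 0.
  have := Hl 1 0 0; rewrite !scale1r !addr0 => E.
  by apply: (@addrI _ (phi 0)); rewrite addr0 -E.
have phiM : forall m, M m -> phi m = 0.
  move=> m /rspan_span; elim=> [|c y z [[u es] [nu [Hmu Hnu HVmu ->]]] _ IH]; first exact: phi0.
  rewrite Hl IH addr0 Hmul -(spath_lunit Hm Hf Hmu) Hmul Hp (qB_H R Hh (HV _ HVmu)).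
  by rewrite !(mul0l (B_nalg V0 E1 R)) scaler0.
have phiMM : forall x, MstarM x -> phi x = 0.
  move=> x; rewrite /MstarM => /rspan_span.
  elim=> [|c y z [n [m [Hn Hmm ->]]] _ IH]; first exact: phi0.
  rewrite Hl IH Hmul (phiM m Hmm) (mul0r (B_nalg V0 E1 R)).
  by rewrite scaler0 addr0.
apply: (qB_nz (r := r) (s := s) (R := R) nHw); rewrite -Hp; exact: phiMM.
Qed.
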